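(* (a) Let $\alpha\in(\tfrac12,1]$ be rational and $\lambda\in\mathbb N$, and let $k=\lceil \frac{\lambda\alpha}{2\alpha-1}\rceil$. For every profile $P$, every ranking $r$ that Approval Voting may output on $P$ (under any tie-breaking), and every group $N'$ that is $(\alpha,\lambda)$-significant in $P$, we have $\mathrm{avg}(N',r_{\le k})\ge\lambda$. (b) For every rational $\alpha\in(\tfrac12,1]$ and $\lambda\in\mathbb N$, with $k'=\lceil \frac{\lambda\alpha}{2\alpha-1}\rceil-1$, there exist a profile $P$, a group $N'$ that is $(\alpha,\lambda)$-significant in $P$, and a ranking $r$ that Approval Voting may output on $P$ (for some tie-breaking) such that $\mathrm{avg}(N',r_{\le k'})<\lambda$. (c) For every rational $\alpha\in(0,\tfrac12)$, every $\lambda\in\mathbb N$ and every $k\in\mathbb N$, there exist a profile $P$, a group $N'$ that is $(\alpha,\lambda)$-significant in $P$, and a ranking $r$ that Approval Voting may output on $P$ (for some tie-breaking) such that $\mathrm{avg}(N',r_{\le k})<\lambda$. In particular, for $\alpha<\tfrac12$ Approval Voting does not satisfy $\kappa$-group representation for any function $\kappa$.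
   Context: Let $N=[n]$ be a finite set of voters and $A$ a finite set of $m$ alternatives; a profile $P=(A_1,\dots,A_n)$ gives each voter $i$ a non-empty approval set $A_i\subseteq A$. $N_a=\{i: a\in A_i\}$ and $|N_a|$ is the approval score of $a$. A ranking $r=(r_1,\dots,r_m)$ is a linear order of $A$, $r_{\le k}=\{r_1,\dots,r_k\}$, with the convention $r_{\le k}=A$ for $k\ge m$. Approval Voting outputs any ranking with $|N_{r_1}|\ge\dots\ge|N_{r_m}|$ (ties broken arbitrarily). For nonempty $N'\subseteq N$ and $S\subseteq A$, $\mathrm{avg}(N',S)=\frac1{|N'|}\sum_{i\in N'}|A_i\cap S|$. The cohesiveness of $N'$ is $\lambda(N')=|\bigcap_{i\in N'}A_i|$; $N'$ is $(\alpha,\lambda)$-significant in $P$ if $|N'|=\lceil\alpha n\rceil$ and $\lambda(N')\ge\lambda$. Given $\kappa:((0,1]\cap\mathbb Q)\times\mathbb N\to\mathbb N$, a ranking rule satisfies $\kappa$-group representation if for every profile $P$, every output ranking $r$ (under every tie-breaking), every rational $\alpha\in(0,1]$, every $\lambda\in\mathbb N$ and every $(\alpha,\lambda)$-significant $N'$, $\mathrm{avg}(N',r_{\le\kappa(\alpha,\lambda)})\ge\lambda$. *)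

(* Defs.v *)
From HB Require Import structures.
From mathcomp Require Import all_boot all_order all_algebra.
Set Implicit Arguments. Unset Strict Implicit. Unset Printing Implicit Defensive.
Import Order.TTheory GRing.Theory Num.Theory.

Definition profile (n m : nat) := 'I_n -> {set 'I_m}.

Definition valid_profile n m (P : profile n m) : Prop :=
  forall i : 'I_n, P i != set0.

Definition supporters n m (P : profile n m) (a : 'I_m) : {set 'I_n} :=
  [set i | a \in P i].
Definition score n m (P : profile n m) (a : 'I_m) : nat := #|supporters P a|.

Definition is_ranking m (r : seq 'I_m) : Prop := perm_eq r (enum 'I_m).

(* r_{<= k}; for k >= m this is the whole set of alternatives. *)
Definition top_k m (r : seq 'I_m) (k : nat) : {set 'I_m} := [set x in take k r].

(* Approval Voting may output r (under some tie-breaking) iff r is a ranking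
   with non-increasing approval scores. *)
Definition AV_output n m (P : profile n m) (r : seq 'I_m) : Prop :=
  is_ranking r /\ sorted (fun a b => score P b <= score P a)%N r.

Definition avg n m (P : profile n m) (N' : {set 'I_n}) (S : {set 'I_m}) : rat :=
  ((\sum_(i in N') #|P i :&: S|)%:R / (#|N'|)%:R)%R.

Definition cohesiveness n m (P : profile n m) (N' : {set 'I_n}) : nat :=
  #|\bigcap_(i in N') P i|.

Definition significant n m (P : profile n m) (alpha : rat) (lam : nat)
    (N' : {set 'I_n}) : Prop :=
  (#|N'|%:Z = Num.ceil (alpha * n%:R))%R /\ (lam <= cohesiveness P N')%N.

Definition AV_group_representation (kappa : rat -> nat -> nat) : Prop :=
  forall (n m : nat) (P : profile n m) (r : seq 'I_m),
    (0 < n)%N -> valid_profile P -> AV_output P r ->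
    forall (alpha : rat) (lam : nat) (N' : {set 'I_n}),
      (0 < alpha)%R -> (alpha <= 1)%R -> significant P alpha lam N' ->
      (lam%:R <= avg P N' (top_k r (kappa alpha lam)))%R.

(* Main.v *)
Require Import Defs.
From HB Require Import structures.
From mathcomp Require Import all_boot all_order all_algebra zify ring lra.
Import Order.TTheory GRing.Theory Num.Theory.


Lemma card_ordP n (p : pred nat) : #|[set i : 'I_n | p i]| = count p (iota 0 n).
Proof.
rewrite -val_enum_ord count_map cardsE cardE /enum_mem size_filter count_filter.
by apply: eq_count => x; rewrite /= andbT.
Qed.

Lemma count_lt n s : s <= n -> count (fun i => i < s) (iota 0 n) = s.
Proof.
move=> hs; rewrite -(subnKC hs) iotaD count_cat.
rewrite (eq_in_count (a2 := predT)); last by move=> x; rewrite mem_iota.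
rewrite count_predT size_iota (eq_in_count (a2 := pred0)).
  by rewrite count_pred0 addn0.
by move=> x; rewrite mem_iota /= add0n => /andP[/leq_gtF ->].
Qed.

Lemma mem_take_enum m j (x : 'I_m) : (x \in take j (enum 'I_m)) = (x < j).
Proof.
rewrite -(mem_map val_inj) map_take val_enum_ord take_iota mem_iota /=.
by rewrite add0n leq_min ltn_ord andbT.
Qed.

Lemma sorted_enum_ord m : sorted (fun a b : 'I_m => a < b) (enum 'I_m).
Proof.
have := iota_ltn_sorted 0 m; rewrite -val_enum_ord sorted_map.
by [].
Qed.

Lemma count_ge n s : s <= n -> count (fun i => s <= i) (iota 0 n) = n - s.
Proof.
move=> hs; have := count_predC (fun i => i < s) (iota 0 n).
rewrite count_lt // size_iota => h; rewrite -[in RHS]h addKn.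
by apply: eq_count => x /=; rewrite leqNgt.
Qed.

Definition cP n K lam s t : profile n (K+lam) := fun i =>
  if i < t then setT else if i < s then [set a : 'I_(K+lam) | K <= a]
  else [set a : 'I_(K+lam) | a < K].

Lemma cP_score n K lam s t (a : 'I_(K+lam)) : t <= s -> s <= n ->
  score (cP n K lam s t) a = if a < K then t + (n - s) else s.
Proof.
move=> hts hsn; rewrite /score /supporters.
case: ifP => haK.
  have -> : [set i : 'I_n | a \in cP n K lam s t i] =
            [set i : 'I_n | (fun x => (x < t) || (s <= x)) i].
    apply/setP => i; rewrite !inE /cP.
    by case: ifP => hit; [|case: ifP => his]; rewrite ?inE; lia.
  rewrite (card_ordP _ (fun x => (x < t) || (s <= x))).
  have h := count_predUI (fun x => x < t) (fun x => s <= x) (iota 0 n).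
  have h0 : count (predI (fun x => x < t) (fun x => s <= x)) (iota 0 n) = 0.
    transitivity (count pred0 (iota 0 n)); last exact: count_pred0.
    by apply: eq_count => x /=; lia.
  rewrite h0 addn0 (count_lt _ _ (leq_trans hts hsn)) (count_ge _ _ hsn) in h.
  by rewrite -h.
have -> : [set i : 'I_n | a \in cP n K lam s t i] =
          [set i : 'I_n | (fun x => x < s) i].
  apply/setP => i; rewrite !inE /cP.
  by case: ifP => hit; [|case: ifP => his]; rewrite ?inE; lia.
by rewrite (card_ordP _ (fun x => x < s)) count_lt.
Qed.

Lemma construct n K lam s t j : 0 < s -> t <= s -> s <= n -> 0 < lam -> j <= K ->
  (s < n -> 0 < K) -> s <= t + (n - s) ->
  [/\ valid_profile (cP n K lam s t), AV_output (cP n K lam s t) (enum 'I_(K+lam)),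
      #|[set i : 'I_n | i < s]| = s,
      lam <= cohesiveness (cP n K lam s t) [set i : 'I_n | i < s] &
      avg (cP n K lam s t) [set i : 'I_n | i < s] (top_k (enum 'I_(K+lam)) j)
        = ((t * j)%:R / s%:R)%R].
Proof.
move=> hs hts hsn hlam hjK hK hst.
have hK1 : K < K + lam by lia.
have hcard : #|[set i : 'I_n | i < s]| = s.
  by rewrite (card_ordP _ (fun x => x < s)) count_lt.
split => //.
- move=> i; rewrite /cP; apply/set0Pn; case: ifP => hit.
    by exists (Ordinal hK1); rewrite inE.
  case: ifP => his; first by exists (Ordinal hK1); rewrite inE.
  have h0 : 0 < K + lam by lia.
  exists (Ordinal h0); rewrite inE /=.
  have := ltn_ord i; lia.
- split; first exact: perm_refl.
  apply: (sub_sorted _ (sorted_enum_ord _)) => a b /= hab.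
  rewrite !cP_score //.
  by case: ifP => h1; case: ifP => h2; lia.
- rewrite /cohesiveness.
  apply: (@leq_trans #|[set a : 'I_(K+lam) | K <= a]|).
    rewrite (card_ordP _ (fun x => K <= x)) count_ge; lia.
  apply: subset_leq_card; apply/subsetP => a ha; apply/bigcapP => i.
  rewrite inE => his; rewrite /cP.
  case: ifP => h1; first by rewrite inE.
  case: ifP => h2; first exact: ha.
  lia.
- rewrite /avg hcard.
  have -> : top_k (enum 'I_(K+lam)) j = [set a : 'I_(K+lam) | a < j].
    by apply/setP => a; rewrite !inE mem_take_enum.
  rewrite (eq_bigr (fun i : 'I_n => if i < t then j else 0)); last first.
    move=> i; rewrite inE => his; rewrite /cP.
    case: ifP => hit.
      rewrite setTI (card_ordP _ (fun x => x < j)) count_lt //; lia.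
    case: ifP => h2; last lia.
    apply/eqP; rewrite cards_eq0; apply/eqP/setP => a; rewrite !inE; lia.
  rewrite -big_mkcondr sum_nat_const.
  suff -> : #|(fun i : 'I_n => (i \in [set i0 : 'I_n | (i0 < s)%N]) && (i < t)%N)| = t by [].
  transitivity #|[set i : 'I_n | (fun x => x < t) i]|; last first.
    by rewrite (card_ordP _ (fun x => x < t)) count_lt // (leq_trans hts).
  apply: eq_card => i; rewrite !inE /= unfold_in /= inE; lia.
Qed.

Lemma card_inter_sum m (A T : {set 'I_m}) : #|A :&: T| = \sum_(a in T) (a \in A).
Proof.
rewrite -sum1_card big_mkcond [RHS]big_mkcond /=; apply: eq_bigr => a _.
by rewrite inE; case: (a \in A); case: (a \in T).
Qed.

Lemma score_sum n m (P : profile n m) a : score P a = \sum_(i : 'I_n) (a \in P i).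
Proof.
rewrite /score /supporters -sum1_card big_mkcond; apply: eq_bigr => i _.
by rewrite inE; case: (a \in P i).
Qed.

Lemma part_a_nat n m (P : profile n m) r (N' : {set 'I_n}) k lam :
  AV_output P r -> lam <= cohesiveness P N' ->
  lam * #|N'| <= k * (2 * #|N'| - n) ->
  lam * #|N'| <= \sum_(i in N') #|P i :&: top_k r k|.
Proof.
move=> [hperm hsort] hcoh harith.
set C := \bigcap_(i in N') P i.
set T := top_k r k.
set s := #|N'|.
case: (boolP (C \subset T)) => hCT.
  rewrite mulnC -sum_nat_const; apply: leq_sum => i hi.
  apply: (leq_trans hcoh); apply: subset_leq_card; apply/subsetP => a ha.
  rewrite inE (subsetP hCT a ha) andbT.
  by move/bigcapP: ha; apply.
have [c hcC hcT] := subsetPn hCT.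
have hcr : c \in r by rewrite (perm_mem hperm) mem_enum.
have hcT' : c \notin take k r by move: hcT; rewrite inE.
have hkr : k < size r.
  rewrite ltnNge; apply/negP => hle.
  by move: hcT'; rewrite take_oversize // hcr.
have huniq : uniq r by rewrite (perm_uniq hperm) enum_uniq.
have hT : #|T| = k.
  by rewrite cardsE (card_uniqP (take_uniq _ huniq)) size_takel // ltnW.
have hscore : forall a, a \in T -> s <= score P a.
  move=> a; rewrite inE => ha.
  have hcs : s <= score P c.
    apply: subset_leq_card; apply/subsetP => i hi; rewrite inE.
    by move/bigcapP: hcC; apply.
  apply: (leq_trans hcs).
  have htr : transitive (fun a b : 'I_m => score P b <= score P a).
    by move=> y x z /= h1 h2; exact: leq_trans h2 h1.
  move: hsort; rewrite (sorted_pairwise htr) -(cat_take_drop k r) pairwise_cat.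
  case/and3P => /allrelP hall _ _; apply: hall => //.
  by move: hcr; rewrite -{1}(cat_take_drop k r) mem_cat (negbTE hcT').
have hdc : \sum_(i : 'I_n) #|P i :&: T| = \sum_(a in T) score P a.
  rewrite (eq_bigr (fun i => \sum_(a in T) (a \in P i))); last first.
    by move=> i _; exact: card_inter_sum.
  rewrite exchange_big /=; apply: eq_bigr => a _.
  by rewrite score_sum.
have hlow : k * s <= \sum_(a in T) score P a.
  by rewrite -hT -sum_nat_const; apply: leq_sum.
move: hdc; rewrite (bigID (fun i => i \in N')) /= => hdc.
have hup : \sum_(i | true && (i \notin N')) #|P i :&: T|
           <= \sum_(i | true && (i \notin N')) k.
  apply: leq_sum => i _; rewrite -hT; apply: subset_leq_card; exact: subsetIr.
have hconst : s * k + \sum_(i | true && (i \notin N')) k = n * k.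
  have := sum_nat_const [pred i : 'I_n | true] k.
  rewrite (bigID (fun i => i \in N')) /=.
  rewrite (_ : #|[pred i : 'I_n | true]| = n); last by rewrite -[RHS](card_ord n); apply: eq_card.
  move=> <-; congr (_ + _).
  by rewrite -sum_nat_const.
move: hdc hlow hup hconst harith.
set S1 := \sum_(i | true && (i \in N')) _.
set S2 := \sum_(i | true && (i \notin N')) _.
set X := \sum_(i | true && (i \notin N')) _.
rewrite mulnBr => hdc hlow hup hconst harith.
rewrite -/s mulnCA in harith; rewrite [s * k]mulnC [n * k]mulnC in hconst.
clear hscore; clearbody S1 S2 X s T C. move: hdc hlow; set Z := \sum_(a in T) _ => hdc hlow. move: (lam * s) (k * s) (k * n) harith hconst hlow => a b d. lia.
Qed.

Lemma part_a (alpha : rat) (lam : nat) :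
     (1 / 2 < alpha)%R -> (alpha <= 1)%R ->
     let k := `|Num.ceil (lam%:R * alpha / (2 * alpha - 1))|%N in
     forall (n m : nat) (P : profile n m) (r : seq 'I_m) (N' : {set 'I_n}),
       (0 < n)%N -> valid_profile P -> AV_output P r ->
       significant P alpha lam N' ->
       (lam%:R <= avg P N' (top_k r k))%R.
Proof.
move=> ha1 ha2 k n m P r N' hn hv hav [hsz hcoh].
rewrite /avg.
set s := #|N'|.
set x := (lam%:R * alpha / (2 * alpha - 1))%R.
have hsR : (alpha * n%:R <= s%:R :> rat)%R.
  have e : (s%:R : rat) = ((Num.ceil (alpha * n%:R))%:~R)%R by rewrite -hsz.
  by rewrite e ceil_ge.
have ha0 : (0 < alpha)%R by lra.
have hnR : (0 < n%:R :> rat)%R by rewrite ltr0n.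
have hs0 : (0 < s)%N.
  rewrite -(ltr0n rat); apply: lt_le_trans hsR; exact: mulr_gt0.
have h2a : (0 < 2 * alpha - 1 :> rat)%R by lra.
have hx0 : (0 <= x)%R by apply: divr_ge0; [apply: mulr_ge0 => //; lra | lra].
  have hk : (k%:R : rat) = ((Num.ceil x)%:~R)%R.
  rewrite /k natr_absz ger0_norm // ceil_ge0; apply: (lt_le_trans _ hx0); lra.
have hkx : (x <= k%:R)%R by rewrite hk ceil_ge.
have hlk : (lam%:R * alpha <= k%:R * (2 * alpha - 1) :> rat)%R.
  by rewrite -ler_pdivrMr.
have hsR0 : (0 < s%:R :> rat)%R by rewrite ltr0n.
have hns : (n <= 2 * s)%N.
  rewrite -(ler_nat rat) natrM; nra.
rewrite ler_pdivlMr // -natrM ler_nat.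
apply: part_a_nat => //.
rewrite -(ler_nat rat) !natrM natrB // natrM.
have h1 : (0 <= k%:R * (s%:R - alpha * n%:R) :> rat)%R.
  by apply: mulr_ge0; [rewrite ler0n | rewrite subr_ge0].
have h2 : (0 <= s%:R * (k%:R * (2 * alpha - 1) - lam%:R * alpha) :> rat)%R.
  by apply: mulr_ge0; [rewrite ler0n | rewrite subr_ge0].
rewrite -subr_ge0 -(pmulr_rge0 _ ha0).
have -> : (alpha * (k%:R * (2%:R * s%:R - n%:R) - lam%:R * s%:R)
   = k%:R * (s%:R - alpha * n%:R) + s%:R * (k%:R * (2 * alpha - 1) - lam%:R * alpha) :> rat)%R.
  by ring.
exact: addr_ge0.
Qed.

Lemma numden (alpha : rat) : (0 < alpha)%R ->
  [/\ (0 < `|denq alpha|)%N, (0 < `|numq alpha|)%N &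
   (alpha * (`|denq alpha|)%:R = (`|numq alpha|)%:R)%R].
Proof.
move=> ha.
have hd := denq_gt0 alpha.
have hq : (0 < numq alpha)%R by rewrite numq_gt0.
split; [lia | lia |].
rewrite !natr_absz !gtr0_norm //.
by rewrite -{1}(divq_num_den alpha) divfK // intr_eq0 gt_eqF.
Qed.

Lemma ceil_nat (s : nat) : Num.ceil (s%:R : rat) = Posz s.
Proof.
have -> : (s%:R : rat) = ((Posz s)%:~R)%R by [].
by rewrite intrKceil.
Qed.

Lemma part_c (alpha : rat) (lam k : nat) :
     (0 < alpha)%R -> (alpha < 1 / 2)%R -> (0 < lam)%N ->
     exists (n m : nat) (P : profile n m) (r : seq 'I_m) (N' : {set 'I_n}),
       [/\ (0 < n)%N, valid_profile P, AV_output P r,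
           significant P alpha lam N' &
           (avg P N' (top_k r k) < lam%:R)%R].
Proof.
move=> ha0 ha1 hlam.
have [hn hs hrat] := numden alpha ha0.
move: hn hs hrat; set n := `|denq alpha|%N; set s := `|numq alpha|%N => hn hs hrat.
have h2s : (2 * s < n)%N.
  rewrite -(ltr_nat rat) natrM -hrat.
  have hnR : (0 < n%:R :> rat)%R by rewrite ltr0n.
  nra.
have [hv hav hcard hcoh havg] :=
  @construct n k.+1 lam s 0 k hs (leq0n s) (ltac:(lia)) hlam (leqnSn k)
    (fun _ => ltn0Sn k) (ltac:(lia)).
exists n, (k.+1 + lam), (cP n k.+1 lam s 0), (enum 'I_(k.+1+lam)), [set i : 'I_n | i < s].
split => //.
  by split => //; rewrite hcard hrat ceil_nat.
by rewrite havg mul0n mul0r ltr0n.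
Qed.

Lemma part_b (alpha : rat) (lam : nat) :
     (1 / 2 < alpha)%R -> (alpha <= 1)%R -> (0 < lam)%N ->
     let k' := (`|Num.ceil (lam%:R * alpha / (2 * alpha - 1))|%N).-1 in
     exists (n m : nat) (P : profile n m) (r : seq 'I_m) (N' : {set 'I_n}),
       [/\ (0 < n)%N, valid_profile P, AV_output P r,
           significant P alpha lam N' &
           (avg P N' (top_k r k') < lam%:R)%R].
Proof.
move=> ha1 ha2 hlam.
set x := (lam%:R * alpha / (2 * alpha - 1))%R.
move=> k'.
have ha0 : (0 < alpha)%R by lra.
have [hn hs hrat] := numden alpha ha0.
move: hn hs hrat; set n := `|denq alpha|%N; set s := `|numq alpha|%N => hn hs hrat.
have hnR : (0 < n%:R :> rat)%R by rewrite ltr0n.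
have hsR : (0 < s%:R :> rat)%R by rewrite ltr0n.
have hsn : (s <= n)%N by rewrite -(ler_nat rat) -hrat; nra.
have h2s : (n < 2 * s)%N by rewrite -(ltr_nat rat) natrM -hrat; nra.
have hlamR : (1 <= lam%:R :> rat)%R by rewrite ler1n.
have h2a : (0 < 2 * alpha - 1 :> rat)%R by lra.
have hx0 : (0 < x)%R by apply: divr_gt0 => //; apply: mulr_gt0 => //; lra.
have hc0 : (0 < Num.ceil x)%R by rewrite ceil_gt0.
have e : k'.+1 = `|Num.ceil x|%N by rewrite /k' prednK //; lia.
have hkR : (k'%:R + 1 = (Num.ceil x)%:~R :> rat)%R.
  by rewrite natr1 e natr_absz gtr0_norm.
have hkx : (k'%:R < x)%R.
  have := ceilB1_lt x; rewrite intrB -hkR; lra.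
have hkx' : (k'%:R * (2 * alpha - 1) < lam%:R * alpha :> rat)%R.
  by rewrite -ltr_pdivlMr.
have hK : (s < n)%N -> (0 < k')%N.
  move=> hlt.
  have hltR : (s%:R < n%:R :> rat)%R by rewrite ltr_nat.
  have ha3 : (alpha < 1)%R by nra.
  have hx1 : (1 < x)%R by rewrite ltr_pdivlMr //; nra.
  have hx2 : (x <= (Num.ceil x)%:~R)%R by apply: ceil_ge.
  by rewrite -(ltr0n rat); lra.
have [hv hav hcard hcoh havg] :=
  @construct n k' lam s (2 * s - n) k' hs (ltac:(lia)) hsn hlam (leqnn k') hK (ltac:(lia)).
exists n, (k' + lam), (cP n k' lam s (2 * s - n)), (enum 'I_(k'+lam)), [set i : 'I_n | i < s].
split => //.
  by split => //; rewrite hcard hrat ceil_nat.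
rewrite havg ltr_pdivrMr // natrM natrB ?natrM; last by lia.
have h : (0 < n%:R * (lam%:R * alpha - k'%:R * (2 * alpha - 1)) :> rat)%R.
  by apply: mulr_gt0 => //; rewrite subr_gt0.
rewrite -hrat; nra.
Qed.

Theorem theorem2 :
  (* (a) *)
  (forall (alpha : rat) (lam : nat),
     (1 / 2 < alpha)%R -> (alpha <= 1)%R ->
     let k := `|Num.ceil (lam%:R * alpha / (2 * alpha - 1))|%N in
     forall (n m : nat) (P : profile n m) (r : seq 'I_m) (N' : {set 'I_n}),
       (0 < n)%N -> valid_profile P -> AV_output P r ->
       significant P alpha lam N' ->
       (lam%:R <= avg P N' (top_k r k))%R)
  /\
  (* (b) *)
  (forall (alpha : rat) (lam : nat),
     (1 / 2 < alpha)%R -> (alpha <= 1)%R -> (0 < lam)%N ->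
     let k' := (`|Num.ceil (lam%:R * alpha / (2 * alpha - 1))|%N).-1 in
     exists (n m : nat) (P : profile n m) (r : seq 'I_m) (N' : {set 'I_n}),
       [/\ (0 < n)%N, valid_profile P, AV_output P r,
           significant P alpha lam N' &
           (avg P N' (top_k r k') < lam%:R)%R])
  /\
  (* (c) *)
  (forall (alpha : rat) (lam k : nat),
     (0 < alpha)%R -> (alpha < 1 / 2)%R -> (0 < lam)%N ->
     exists (n m : nat) (P : profile n m) (r : seq 'I_m) (N' : {set 'I_n}),
       [/\ (0 < n)%N, valid_profile P, AV_output P r,
           significant P alpha lam N' &
           (avg P N' (top_k r k) < lam%:R)%R])
  /\
  (* (c), "in particular" *)
  (forall kappa : rat -> nat -> nat, ~ AV_group_representation kappa).
Proof.
split; first exact: part_a.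
split; first exact: part_b.
split; first exact: part_c.
move=> kappa H.
have ha0 : (0 < 1 / 3 :> rat)%R by lra.
have ha1 : (1 / 3 < 1 / 2 :> rat)%R by lra.
have [n [m [P [r [N' [hn hv hav hsig hlt]]]]]] :=
  part_c (1 / 3) 1 (kappa (1 / 3)%R 1) ha0 ha1 (ltn0Sn 0).
have := H n m P r hn hv hav (1 / 3)%R 1 N' ha0 (ltac:(lra)) hsig.
by rewrite leNgt hlt.
Qed.
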